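(* Let $D$ be a finite set, $k\ge2$, and let $P:D^k\to\{0,1\}$ be a $k$-ary predicate which contains a singleton $\ell$-cube for some $2\le\ell\le k$. Then there exist a weighted directed $k$-uniform hypergraph $H=(V,E,w)$ with $|V|=n$ such that for every $0<\varepsilon<1$ and every $\varepsilon$-$P$-sparsifier $H_\varepsilon=(V,E_\varepsilon,w_\varepsilon)$ of $H$ we have $|E_\varepsilon|=\Omega(n^\ell)$; that is, there is a constant $c>0$ such that for infinitely many $n$ there is such an $H$ on $n$ vertices with $|E_\varepsilon|\ge cn^\ell$ for all such $\varepsilon$ and $H_\varepsilon$.
   Context: $P$ contains a singleton $\ell$-cube if there exist two-element subsets $D_j=\{d^j_0,d^j_1\}\subseteq D$ for $j=1,\dots,\ell$, indices $n_1,\dots,n_\ell\in\{0,1\}$ and a permutation $\sigma$ of the $k$ coordinates such that (i) there exist $x_{\ell+1},\dots,x_k\in D$ with $P(\sigma(d^1_{n_1},\dots,d^\ell_{n_\ell},x_{\ell+1},\dots,x_k))=1$, and (ii) for all $y_{\ell+1},\dots,y_k\in D$ and all $i_1,\dots,i_\ell\in\{0,1\}$, $P(\sigma(d^1_{i_1},\dots,d^\ell_{i_\ell},y_{\ell+1},\dots,y_k))=1$ implies $i_j=n_j$ for all $j=1,\dots,\ell$. Here $\sigma(\cdot)$ permutes the entries of the tuple. A weighted directed $k$-uniform hypergraph $H=(V,E,w)$ has $E$ a set of ordered $k$-tuples of distinct vertices and $w:E\to\mathbb{R}_{>0}$. For $A:V\to D$, $\mathrm{Val}_{H,P}(A)=\sum_{e\in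 E}w(e)P(A(e))$ with $A$ applied entrywise. An $\varepsilon$-$P$-sparsifier of $H$ is $H_\varepsilon=(V,E_\varepsilon,w_\varepsilon)$ with $E_\varepsilon\subseteq E$, $w_\varepsilon:E_\varepsilon\to\mathbb{R}_{>0}$, such that for every $A:V\to D$, $(1-\varepsilon)\mathrm{Val}_{H,P}(A)\le\mathrm{Val}_{H_\varepsilon,P}(A)\le(1+\varepsilon)\mathrm{Val}_{H,P}(A)$. *)

(* Defs.v *)
From HB Require Import structures.
From mathcomp Require Import all_boot all_order all_algebra all_fingroup.
From mathcomp Require Import reals.
Set Implicit Arguments. Unset Strict Implicit. Unset Printing Implicit Defensive.
Import Order.TTheory GRing.Theory Num.Theory.
Local Open Scope ring_scope.

Definition perm_tuple (D : Type) (k : nat) (s : 'S_k) (a : k.-tuple D)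
  : k.-tuple D := [tuple tnth a (s i) | i < k].

(* The tuple (d^1_{i_1}, ..., d^l_{i_l}, y_{l+1}, ..., y_k): coordinates j < l
   are taken from the two-element set D_{j} = {d0 j, d1 j} according to the
   bit sel j (false = index 0, true = index 1); coordinates j >= l from y. *)
Definition cube_tuple (D : Type) (k l : nat) (d0 d1 : 'I_k -> D)
  (sel : 'I_k -> bool) (y : 'I_k -> D) : k.-tuple D :=
  [tuple if (i < l)%N then (if sel i then d1 i else d0 i) else y i | i < k].

Definition singleton_cube (D : finType) (k : nat) (P : k.-tuple D -> bool)
  (l : nat) : Prop :=
  exists (d0 d1 : 'I_k -> D) (nsel : 'I_k -> bool) (s : 'S_k),
    (forall j : 'I_k, (j < l)%N -> d0 j != d1 j) /\
    (exists x : 'I_k -> D, P (perm_tuple s (cube_tuple l d0 d1 nsel x))) /\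
    (forall (y : 'I_k -> D) (sel : 'I_k -> bool),
        P (perm_tuple s (cube_tuple l d0 d1 sel y)) ->
        forall j : 'I_k, (j < l)%N -> sel j = nsel j).

Definition is_wdhypergraph (R : realType) (n k : nat)
  (E : {set k.-tuple 'I_n}) (w : k.-tuple 'I_n -> R) : Prop :=
  (forall e, e \in E -> uniq e) /\ (forall e, e \in E -> 0 < w e).

Definition Val (R : realType) (D : finType) (n k : nat) (P : k.-tuple D -> bool)
  (E : {set k.-tuple 'I_n}) (w : k.-tuple 'I_n -> R) (A : 'I_n -> D) : R :=
  \sum_(e in E) w e * (P (map_tuple A e))%:R.

Definition is_sparsifier (R : realType) (D : finType) (n k : nat)
  (P : k.-tuple D -> bool) (eps : R)
  (E : {set k.-tuple 'I_n}) (w : k.-tuple 'I_n -> R)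
  (E' : {set k.-tuple 'I_n}) (w' : k.-tuple 'I_n -> R) : Prop :=
  E' \subset E /\ (forall e, e \in E' -> 0 < w' e) /\
  forall A : 'I_n -> D,
    (1 - eps) * Val P E w A <= Val P E' w' A /\
    Val P E' w' A <= (1 + eps) * Val P E w A.

(* Main.v *)
Require Import Defs.
From HB Require Import structures.
From mathcomp Require Import all_boot all_order all_algebra all_fingroup.
From mathcomp Require Import reals.
From mathcomp Require Import zify.
Import Order.TTheory GRing.Theory Num.Theory.
Local Open Scope ring_scope.
Set Implicit Arguments. Unset Strict Implicit.

Definition fk (l m : nat) (f : {ffun 'I_l -> 'I_m.+1}) (i : nat) : nat :=
  if (insub i : option 'I_l) is Some j then val (f j) else 0%N.

Lemma fk_lt l m (f : {ffun 'I_l -> 'I_m.+1}) i : (fk f i < m.+1)%N.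
Proof. rewrite /fk; case: insub => [j|] //=. Qed.

Lemma fk_val l m (f : {ffun 'I_l -> 'I_m.+1}) (j : 'I_l) : fk f j = f j.
Proof. by rewrite /fk valK. Qed.

Lemma vert_lt k l m (f : {ffun 'I_l -> 'I_m.+1}) (i : 'I_k) :
  (i * m.+1 + fk f i < k * m.+1)%N.
Proof. have := fk_lt f i; have := ltn_ord i. nia. Qed.

Definition tvert k l m (f : {ffun 'I_l -> 'I_m.+1}) : k.-tuple 'I_(k * m.+1) :=
  [tuple Ordinal (vert_lt f i) | i < k].

Lemma vert_div k l m (f : {ffun 'I_l -> 'I_m.+1}) (i : 'I_k) :
  ((i * m.+1 + fk f i) %/ m.+1 = i)%N.
Proof. by rewrite divnMDl // divn_small ?fk_lt // addn0. Qed.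

Lemma vert_mod k l m (f : {ffun 'I_l -> 'I_m.+1}) (i : 'I_k) :
  ((i * m.+1 + fk f i) %% m.+1 = fk f i)%N.
Proof. by rewrite modnMDl modn_small // fk_lt. Qed.

Definition Aof (D : Type) k l m (d0 d1 : 'I_k -> D) (nsel : 'I_k -> bool)
  (x : 'I_k -> D) (i0 : 'I_k) (f : {ffun 'I_l -> 'I_m.+1}) (v : 'I_(k * m.+1)) : D :=
  if (insub (v %/ m.+1)%N : option 'I_k) is Some ii then
    (if (ii < l)%N then
       (if (if (v %% m.+1 == fk f ii)%N then nsel ii else ~~ nsel ii)
        then d1 ii else d0 ii)
     else x ii)
  else x i0.

Lemma map_tvert (D : Type) k l m (d0 d1 : 'I_k -> D) nsel x i0
  (f f' : {ffun 'I_l -> 'I_m.+1}) :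
  map_tuple (Aof d0 d1 nsel x i0 f) (tvert k f') =
  cube_tuple l d0 d1 (fun ii => if (fk f' ii == fk f ii)%N then nsel ii else ~~ nsel ii) x.
Proof.
apply: eq_from_tnth => i.
by rewrite tnth_map !tnth_mktuple /Aof /= vert_div valK vert_mod.
Qed.

Lemma map_perm (T U : Type) k (A : T -> U) (s : 'S_k) (t : k.-tuple T) :
  map_tuple A (perm_tuple s t) = perm_tuple s (map_tuple A t).
Proof. by apply: eq_from_tnth => i; rewrite tnth_map !tnth_mktuple tnth_map. Qed.

Lemma cube_ext (D : Type) k l (d0 d1 : 'I_k -> D) sel sel' y :
  (forall i, sel i = sel' i) ->
  cube_tuple l d0 d1 sel y = cube_tuple l d0 d1 sel' y.
Proof. by move=> H; apply: eq_from_tnth => i; rewrite !tnth_mktuple H. Qed.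

Lemma tvert_inj k l m (hl : (l <= k)%N) : injective (@tvert k l m).
Proof.
move=> f f' H; apply/ffunP => j.
have := congr1 (fun t => val (tnth t (widen_ord hl j))) H.
rewrite !tnth_mktuple /= !fk_val => /addnI H'.
exact: val_inj.
Qed.

Definition edge k l m (s : 'S_k) (f : {ffun 'I_l -> 'I_m.+1}) := perm_tuple s (tvert k f).

Lemma perm_tuple_inj (T : Type) k (s : 'S_k) : injective (@perm_tuple T k s).
Proof.
move=> t t' H; apply: eq_from_tnth => i.
by have := congr1 (fun u => tnth u (s^-1 i)%g) H; rewrite !tnth_mktuple permKV.
Qed.

Lemma edge_inj k l m (s : 'S_k) (hl : (l <= k)%N) : injective (@edge k l m s).
Proof. by move=> f f' /perm_tuple_inj /tvert_inj; apply. Qed.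

Lemma edge_uniq k l m (s : 'S_k) (f : {ffun 'I_l -> 'I_m.+1}) : uniq (edge s f).
Proof.
apply/tuple_uniqP => i j H; rewrite !tnth_mktuple in H.
have := congr1 (fun v : 'I_(k * m.+1) => ((val v) %/ m.+1)%N) H.
by rewrite /= !vert_div => /val_inj /perm_inj.
Qed.

Theorem proposition15 (R : realType) (D : finType) (k : nat)
  (P : k.-tuple D -> bool) (l : nat) :
  (2 <= k)%N -> (2 <= l)%N -> (l <= k)%N -> singleton_cube P l ->
  exists c : R, 0 < c /\
    forall N : nat, exists n : nat, (N <= n)%N /\
      exists (E : {set k.-tuple 'I_n}) (w : k.-tuple 'I_n -> R),
        is_wdhypergraph E w /\
        forall eps : R, 0 < eps -> eps < 1 ->
        forall (E' : {set k.-tuple 'I_n}) (w' : k.-tuple 'I_n -> R),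
          is_sparsifier P eps E w E' w' ->
          c * (n%:R ^+ l) <= (#|E'|)%:R.
Proof.
move=> hk hl2 hlk [d0 [d1 [nsel [s [_ [[x Hx] Hiii]]]]]].
have k0 : (0 < k)%N by apply: leq_trans hk.
have i0 : 'I_k := Ordinal k0.
exists ((k%:R ^+ l)^-1); split; first by rewrite invr_gt0 exprn_gt0 // ltr0n.
move=> N; exists (k * N.+1)%N; split; first by nia.
set E := [set edge s f | f : {ffun 'I_l -> 'I_N.+1}].
exists E, (fun _ => 1); split.
  by split => // e /imsetP [f _ ->]; apply: edge_uniq.
move=> eps he0 he1 E' w' [sub [_ Happ]].
have EE' : E \subset E'.
  apply/subsetP => e /imsetP [f _ ->]; apply/negPn/negP => notin.
  set A := Aof d0 d1 nsel x i0 f.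
  have key : forall f', P (map_tuple A (edge s f')) = (f' == f).
    move=> f'; rewrite /edge map_perm map_tvert; apply/idP/eqP.
    - move=> HP; have Hs := Hiii _ _ HP; apply/ffunP => j.
      have := Hs (widen_ord hlk j) (ltn_ord j).
      rewrite /= !fk_val; case: eqP => [E1 _|_]; first exact: val_inj.
      by case: (nsel _).
    - move=> ->; rewrite (@cube_ext _ _ _ _ _ _ nsel) // => i.
      by rewrite eqxx.
  have keyE : forall e', e' \in E -> P (map_tuple A e') = (e' == edge s f).
    move=> e' /imsetP [f' _ ->]; rewrite key.
    by rewrite (inj_eq (@edge_inj _ _ _ s hlk)).
  have [H1 _] := Happ A.
  have V1 : Val P E (fun _ => 1 : R) A = 1.
    rewrite /Val (bigD1 (edge s f)) ?imset_f //= keyE ?imset_f // eqxx mul1r.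
    rewrite big1 ?addr0 // => e' /andP [he' ne].
    by rewrite keyE // (negbTE ne) mulr0.
  have V0 : Val P E' w' A = 0.
    rewrite /Val big1 // => e' he'; rewrite keyE ?(subsetP sub) //.
    case: eqP => [eq|]; last by rewrite mulr0.
    by move: he'; rewrite eq (negbTE notin).
  move: H1; rewrite V1 V0 mulr1 subr_le0 => H.
  by rewrite leNgt he1 in H.
have cardE : #|E| = (N.+1 ^ l)%N.
  by rewrite card_imset ?card_ffun ?card_ord //; apply: edge_inj.
apply: (@le_trans _ _ (#|E|)%:R); last by rewrite ler_nat subset_leq_card.
rewrite cardE natrX natrM exprMn mulrA mulVf ?mul1r //.
by rewrite expf_neq0 // pnatr_eq0 -lt0n.
Qed.
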